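(* Let $G$ be a non-elementary hyperbolic group and $M$ the maximum order of a finite subgroup of $G$. For every element $g\in G$ of infinite order, the commensurability class of $g$ contains at most $2M$ conjugacy classes of primitive elements.
   Context: Elements $g,h$ are commensurated if $k^{-1}g^mk=h^n$ for some $m,n\in\mathbb{Z}\setminus\{0\}$, $k\in G$. For $g$ of infinite order, $E^+_G(g)=\{h\mid h^{-1}g^mh=g^m\text{ for some }m\ne0\}$; $g$ is primitive if it has infinite order and $E^+_G(g)=\langle g\rangle F\cong\langle g\rangle\times F$ for some finite subgroup $F$. *)

(* Defs.v *)
From Stdlib Require Import ZArith List.
Import ListNotations.
Open Scope Z_scope.

Record Group := {
  carrier :> Type;
  gmul : carrier -> carrier -> carrier;
  gone : carrier;
  ginv : carrier -> carrier;
  gmulA : forall x y z, gmul x (gmul y z) = gmul (gmul x y) z;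
  gmul1l : forall x, gmul gone x = x;
  gmulVl : forall x, gmul (ginv x) x = gone
}.

Section Defs.
Variable G : Group.
Local Notation "x * y" := (gmul G x y).
Local Notation "1" := (gone G).

Fixpoint npow (x : G) (n : nat) : G :=
  match n with O => 1 | S k => x * npow x k end.

Definition zpow (x : G) (z : Z) : G :=
  match z with
  | Z0 => 1
  | Zpos p => npow x (Pos.to_nat p)
  | Zneg p => ginv G (npow x (Pos.to_nat p))
  end.

Definition conj (k x : G) : G := ginv G k * (x * k).

Definition has_infinite_order (g : G) : Prop := forall n, n <> 0 -> zpow g n <> 1.

Definition finite_subgroup (F : list G) : Prop :=
  NoDup F /\ In 1 F /\
  (forall x y, In x F -> In y F -> In (x * y) F) /\
  (forall x, In x F -> In (ginv G x) F).

Definition word_prod (w : list G) : G := fold_right (fun a b => a * b) 1 w.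

Definition letters (S : list G) (w : list G) : Prop :=
  forall a, In a w -> In a S \/ In (ginv G a) S.

Definition generates (S : list G) : Prop :=
  forall x, exists w, letters S w /\ word_prod w = x.

Definition is_word_length (S : list G) (len : G -> nat) : Prop :=
  forall x,
    (exists w, letters S w /\ word_prod w = x /\ length w = len x) /\
    (forall w, letters S w -> word_prod w = x -> (len x <= length w)%nat).

(** Gromov hyperbolicity of the Cayley graph, via the four-point condition
    on the word metric d(x,y) = |x^-1 y|_S (doubled Gromov products). *)
Definition hyperbolic_group : Prop :=
  exists (S : list G) (len : G -> nat) (delta : Z),
    generates S /\ is_word_length S len /\
    let d x y := Z.of_nat (len (ginv G x * y)) in
    let gp2 x y w := d w x + d w y - d x y in
    forall x y z w, gp2 x z w >= Z.min (gp2 x y w) (gp2 y z w) - 2 * delta.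

(** Virtually cyclic: some cyclic subgroup <c> has finite index. *)
Definition virtually_cyclic : Prop :=
  exists (c : G) (R : list G), forall x, exists r n, In r R /\ x = r * zpow c n.

Definition non_elementary_hyperbolic : Prop :=
  hyperbolic_group /\ ~ virtually_cyclic.

Definition max_finite_subgroup_order (M : nat) : Prop :=
  (exists F, finite_subgroup F /\ length F = M) /\
  (forall F, finite_subgroup F -> (length F <= M)%nat).

Definition commensurated (g h : G) : Prop :=
  exists m n k, m <> 0 /\ n <> 0 /\ conj k (zpow g m) = zpow h n.

Definition Eplus (g h : G) : Prop :=
  exists m, m <> 0 /\ conj h (zpow g m) = zpow g m.

(** g primitive: infinite order and E^+(g) = <g>F = <g> x F, F finite. *)
Definition primitive (g : G) : Prop :=
  has_infinite_order g /\
  exists F, finite_subgroup F /\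
    (forall f, In f F -> f * g = g * f) /\
    (forall h, Eplus g h <-> exists n f, In f F /\ h = zpow g n * f).

Definition conjugate (x y : G) : Prop := exists k, conj k x = y.

End Defs.

(* Main.v *)
Require Import Defs.
From Stdlib Require Import ZArith List Lia Classical ClassicalEpsilon.

Arguments gmul {_}. Arguments ginv {_}. Arguments gone {_}.
Arguments npow {_}. Arguments zpow {_}. Arguments conj {_}.
Local Notation "x <*> y" := (gmul x y) (at level 40, left associativity).

Lemma mulA {G : Group} (x y z : G) : x <*> (y <*> z) = x <*> y <*> z.
Proof. apply gmulA. Qed.
Lemma mul1l {G : Group} (x : G) : gone <*> x = x.
Proof. apply gmul1l. Qed.
Lemma mulVl {G : Group} (x : G) : ginv x <*> x = gone.
Proof. apply gmulVl. Qed.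
Lemma cancel_l {G : Group} (a x y : G) : a <*> x = a <*> y -> x = y.
Proof. intro H. rewrite <- (mul1l x), <- (mul1l y), <- (mulVl a), <- !mulA, H. reflexivity. Qed.
Lemma mulVr {G : Group} (x : G) : x <*> ginv x = gone.
Proof. set (y := x <*> ginv x).
  assert (yy : y <*> y = y). { unfold y. rewrite <- mulA, (mulA (ginv x)), mulVl, mul1l. reflexivity. }
  rewrite <- (mul1l y), <- (mulVl y), <- mulA, yy. reflexivity. Qed.
Lemma mul1r {G : Group} (x : G) : x <*> gone = x.
Proof. rewrite <- (mulVl x), mulA, mulVr, mul1l. reflexivity. Qed.
Lemma cancel_r {G : Group} (a x y : G) : x <*> a = y <*> a -> x = y.
Proof. intro H. rewrite <- (mul1r x), <- (mul1r y), <- (mulVr a), !mulA, H. reflexivity. Qed.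
Lemma inv_uniq {G : Group} (x y : G) : x <*> y = gone -> y = ginv x.
Proof. intro H. apply (cancel_l x). rewrite H, mulVr. reflexivity. Qed.
Lemma invK {G : Group} (x : G) : ginv (ginv x) = x.
Proof. symmetry. apply inv_uniq. apply mulVl. Qed.
Lemma inv_mul {G : Group} (x y : G) : ginv (x <*> y) = ginv y <*> ginv x.
Proof. symmetry. apply inv_uniq. rewrite mulA, <- (mulA x y), mulVr, mul1r, mulVr. reflexivity. Qed.
Lemma inv1 {G : Group} : ginv (gone : G) = gone.
Proof. symmetry. apply inv_uniq. apply mul1l. Qed.

Definition ishom {G : Group} (phi : G -> G) := forall x y, phi (x <*> y) = phi x <*> phi y.
Lemma hom1 {G : Group} (phi : G -> G) : ishom phi -> phi gone = gone.
Proof. intro H. apply (cancel_l (phi gone)). rewrite <- H, !mul1r. reflexivity. Qed.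
Lemma homV {G : Group} (phi : G -> G) x : ishom phi -> phi (ginv x) = ginv (phi x).
Proof. intro H. apply inv_uniq. rewrite <- H, mulVr. apply hom1, H. Qed.

Lemma npow_succ_r {G : Group} (x : G) n : npow x (S n) = npow x n <*> x.
Proof. induction n. simpl. rewrite mul1r, mul1l. reflexivity.
  simpl in *. rewrite IHn, mulA, IHn. reflexivity. Qed.

Lemma zpow_succ {G : Group} (x : G) n : zpow x (Z.succ n) = zpow x n <*> x.
Proof. destruct n as [|p|p]; simpl.
- rewrite mul1r, mul1l. reflexivity.
- rewrite Pos.add_1_r, Pos2Nat.inj_succ. apply npow_succ_r.
- destruct (Pos.eq_dec p 1) as [->|Hp].
  + simpl. rewrite mul1r, mulVl. reflexivity.
  + assert (E : Z.pos_sub 1 p = Zneg (Pos.pred p)).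
    { rewrite Z.pos_sub_lt by lia. f_equal. lia. }
    rewrite E. simpl.
    assert (E2 : Pos.to_nat p = S (Pos.to_nat (Pos.pred p))) by lia.
    rewrite E2. simpl. rewrite inv_mul, <- mulA, mulVl, mul1r. reflexivity.
Qed.

Lemma zpow_pred {G : Group} (x : G) n : zpow x (Z.pred n) = zpow x n <*> ginv x.
Proof. rewrite <- (Z.succ_pred n) at 2. rewrite zpow_succ, <- mulA, mulVr, mul1r. reflexivity. Qed.

Lemma zpow0 {G : Group} (x : G) : zpow x 0 = gone.
Proof. reflexivity. Qed.
Lemma zpow1 {G : Group} (x : G) : zpow x 1 = x.
Proof. simpl. apply mul1r. Qed.

Lemma zpow_add {G : Group} (x : G) a b : zpow x (a + b) = zpow x a <*> zpow x b.
Proof. induction b using Z.peano_ind.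
- rewrite Z.add_0_r, zpow0, mul1r. reflexivity.
- rewrite Z.add_succ_r, !zpow_succ, IHb, mulA. reflexivity.
- rewrite Z.add_pred_r, !zpow_pred, IHb, mulA. reflexivity.
Qed.

Lemma zpow_opp {G : Group} (x : G) a : zpow x (- a) = ginv (zpow x a).
Proof. apply inv_uniq. rewrite <- zpow_add, Z.add_opp_diag_r. reflexivity. Qed.

Lemma zpow_mul {G : Group} (x : G) a b : zpow x (a * b) = zpow (zpow x a) b.
Proof. induction b using Z.peano_ind.
- rewrite Z.mul_0_r. reflexivity.
- rewrite Z.mul_succ_r, zpow_add, zpow_succ, IHb. reflexivity.
- rewrite Z.mul_pred_r, <- Z.add_opp_r, zpow_add, zpow_pred, IHb, zpow_opp. reflexivity.
Qed.

Lemma zpow_hom {G : Group} (phi : G -> G) x n : ishom phi -> phi (zpow x n) = zpow (phi x) n.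
Proof. intro H. induction n using Z.peano_ind.
- apply hom1, H.
- rewrite !zpow_succ, H, IHn. reflexivity.
- rewrite !zpow_pred, H, IHn, homV by exact H. reflexivity.
Qed.

Lemma zpow_one {G : Group} n : zpow (gone : G) n = gone.
Proof. induction n using Z.peano_ind.
- reflexivity.
- rewrite zpow_succ, IHn, mul1r. reflexivity.
- rewrite zpow_pred, IHn, inv1, mul1r. reflexivity.
Qed.

Lemma comm_inv {G : Group} (x y : G) : y <*> x = x <*> y -> y <*> ginv x = ginv x <*> y.
Proof. intro H. apply (cancel_l x). rewrite mulA, <- H, <- mulA, mulVr, mul1r, mulA, mulVr, mul1l. reflexivity. Qed.

Lemma zpow_comm {G : Group} (x y : G) n : y <*> x = x <*> y -> y <*> zpow x n = zpow x n <*> y.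
Proof. intro H. induction n using Z.peano_ind.
- rewrite zpow0, mul1l, mul1r. reflexivity.
- rewrite zpow_succ, mulA, IHn, <- !mulA, H. reflexivity.
- rewrite zpow_pred, mulA, IHn, <- !mulA, comm_inv by exact H. reflexivity.
Qed.

Lemma zpow_prod {G : Group} (x y : G) n : x <*> y = y <*> x ->
  zpow (x <*> y) n = zpow x n <*> zpow y n.
Proof. intro H. induction n using Z.peano_ind.
- rewrite !zpow0, mul1l. reflexivity.
- rewrite !zpow_succ, IHn. rewrite <- !mulA. f_equal. rewrite !mulA. f_equal.
  first [symmetry; apply zpow_comm; first [exact H|symmetry; exact H] | apply zpow_comm; first [exact H|symmetry; exact H]].
- apply (cancel_r (x <*> y)). rewrite <- zpow_succ, Z.succ_pred, IHn.
  rewrite <- (Z.succ_pred n) at 1 2. rewrite !zpow_succ.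
  rewrite <- !mulA. f_equal. rewrite !mulA. f_equal.
  first [symmetry; apply zpow_comm; first [exact H|symmetry; exact H] | apply zpow_comm; first [exact H|symmetry; exact H]].
Qed.

Lemma conj_hom {G : Group} (k : G) : ishom (conj k).
Proof. intros x y. unfold conj. rewrite <- !mulA. rewrite (mulA k (ginv k)), mulVr, mul1l. reflexivity. Qed.

Lemma conj_comp {G : Group} (a b x : G) : conj b (conj a x) = conj (a <*> b) x.
Proof. unfold conj. rewrite inv_mul, !mulA. reflexivity. Qed.
Lemma conj1 {G : Group} (x : G) : conj gone x = x.
Proof. unfold conj. rewrite inv1, mul1l, mul1r. reflexivity. Qed.
Lemma conjK {G : Group} (k x : G) : conj k (conj (ginv k) x) = x.
Proof. rewrite conj_comp, mulVl. apply conj1. Qed.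
Lemma conjK' {G : Group} (k x : G) : conj (ginv k) (conj k x) = x.
Proof. rewrite conj_comp, mulVr. apply conj1. Qed.
Lemma conj_self_zpow {G : Group} (x : G) n : conj x (zpow x n) = zpow x n.
Proof. unfold conj. rewrite <- zpow_comm by reflexivity. rewrite mulA, mulVl, mul1l. reflexivity. Qed.
Lemma conj_conj {G : Group} (k a y : G) : conj (conj k a) (conj k y) = conj k (conj a y).
Proof. unfold conj at 1. rewrite <- (homV (conj k)) by apply conj_hom. rewrite <- !conj_hom. reflexivity. Qed.
Lemma conj_comm {G : Group} (a y : G) : conj a y = y -> y <*> a = a <*> y.
Proof. unfold conj. intro H. rewrite <- H at 2. rewrite !mulA, mulVr, mul1l. reflexivity. Qed.

Lemma zpow_nat {G : Group} (x : G) n : zpow x (Z.of_nat n) = npow x n.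
Proof. induction n. reflexivity. rewrite Nat2Z.inj_succ, zpow_succ, IHn, npow_succ_r. reflexivity. Qed.

Lemma npow_add {G : Group} (x : G) a b : npow x (a + b) = npow x a <*> npow x b.
Proof. rewrite <- !zpow_nat, Nat2Z.inj_add. apply zpow_add. Qed.

Lemma fin_order {G : Group} (F : list G) x : finite_subgroup G F -> In x F ->
  exists N, N <> 0%Z /\ zpow x N = gone.
Proof.
  intros [HND [H1 [HM HI]]] Hx.
  apply NNPP. intro Hno.
  assert (Hin : forall n, In (npow x n) F).
  { induction n. exact H1. simpl. apply HM; assumption. }
  set (L := map (npow x) (seq 0 (S (length F)))).
  assert (HL : NoDup L).
  { apply (NoDup_nth L (npow x 0)). unfold L. rewrite length_map, length_seq.
    intros i j Hi Hj E.
    rewrite !map_nth, !seq_nth in E by assumption. simpl in E.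
    destruct (Nat.lt_total i j) as [Hij|[Hij|Hij]]; [exfalso| exact Hij | exfalso].
    - replace j with (i + (j - i))%nat in E by lia. rewrite npow_add in E.
      rewrite <- (mul1r (npow x i)) in E at 1. apply cancel_l in E.
      apply Hno. exists (Z.of_nat (j - i)). split. lia. rewrite zpow_nat. auto.
    - replace i with (j + (i - j))%nat in E by lia. rewrite npow_add in E.
      rewrite <- (mul1r (npow x j)) in E at 2. apply cancel_l in E.
      apply Hno. exists (Z.of_nat (i - j)). split. lia. rewrite zpow_nat. auto. }
  assert (Hinc : incl L F).
  { intros y Hy. unfold L in Hy. apply in_map_iff in Hy. destruct Hy as [n [<- _]]. apply Hin. }
  pose proof (NoDup_incl_length HL Hinc) as Hle. unfold L in Hle.
  rewrite length_map, length_seq in Hle. lia.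
Qed.

Definition big {G : Group} (h0 : G) (F0 : list G) : list G :=
  map (fun f => zpow h0 1 <*> f) F0 ++ map (fun f => zpow h0 (-1) <*> f) F0.

Lemma key {G : Group} (g h0 h : G) (F0 : list G) :
  has_infinite_order G h0 -> finite_subgroup G F0 ->
  (forall f, In f F0 -> f <*> h0 = h0 <*> f) ->
  (forall x, Eplus G h0 x <-> exists n f, In f F0 /\ x = zpow h0 n <*> f) ->
  commensurated G g h0 -> primitive G h -> commensurated G g h ->
  exists t, In t (big h0 F0) /\ conjugate G h t.
Proof.
  intros Hinf0 HF0 Hc0 HE0 [m1 [n1 [k1 [Hm1 [Hn1 E1]]]]] [Hinfh [Fh [HFh [Hch HEh]]]]
    [m2 [n2 [k2 [Hm2 [Hn2 E2]]]]].
  set (k := ginv k1 <*> k2).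
  assert (EA : conj k (zpow h0 (n1 * m2)) = zpow h (n2 * m1)).
  { rewrite zpow_mul, <- E1, <- zpow_hom by apply conj_hom. rewrite <- zpow_mul.
    unfold k. rewrite <- conj_comp, conjK', Z.mul_comm, zpow_mul, zpow_hom by apply conj_hom.
    rewrite E2, <- zpow_mul. reflexivity. }
  set (A := (n1 * m2)%Z) in *. set (B := (n2 * m1)%Z) in *.
  assert (HA : A <> 0%Z) by (unfold A; apply Z.neq_mul_0; auto).
  assert (HB : B <> 0%Z) by (unfold B; apply Z.neq_mul_0; auto).
  set (h' := conj (ginv k) h).
  assert (EB : zpow h' B = zpow h0 A).
  { unfold h'. rewrite <- zpow_hom by apply conj_hom. rewrite <- EA, conjK'. reflexivity. }
  assert (Hh' : Eplus G h0 h').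
  { exists A. split. exact HA. rewrite <- EB. apply conj_self_zpow. }
  apply HE0 in Hh'. destruct Hh' as [c [f [Hf Eh']]].
  assert (Hk0 : Eplus G h (conj k h0)).
  { exists B. split. exact HB. rewrite <- EA, conj_conj, conj_self_zpow. reflexivity. }
  apply HEh in Hk0. destruct Hk0 as [d [f' [Hf' Ek0]]].
  set (f2 := conj (ginv k) f').
  assert (H0eq : h0 = zpow h' d <*> f2).
  { rewrite <- (conjK' k h0), Ek0, conj_hom, zpow_hom by apply conj_hom. reflexivity. }
  assert (cf0 : f <*> h0 = h0 <*> f) by (apply Hc0; exact Hf).
  assert (cfh' : f <*> h' = h' <*> f).
  { rewrite Eh', !mulA, zpow_comm by exact cf0. reflexivity. }
  assert (cf2h' : f2 <*> h' = h' <*> f2).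
  { unfold f2, h'. rewrite <- !conj_hom, Hch by exact Hf'. reflexivity. }
  assert (cff2 : f <*> f2 = f2 <*> f).
  { apply (cancel_l (zpow h' d)). pose proof cf0 as X. rewrite H0eq in X.
    rewrite !mulA, <- X. rewrite !mulA, zpow_comm by exact cfh'. reflexivity. }
  assert (Ecd : zpow h0 (1 - c * d) = zpow f d <*> f2).
  { apply (cancel_l (zpow h0 (c * d))). rewrite <- zpow_add.
    replace (c * d + (1 - c * d))%Z with 1%Z by ring. rewrite zpow1.
    rewrite H0eq at 1. rewrite Eh', zpow_prod, <- zpow_mul, mulA. reflexivity.
    symmetry. apply zpow_comm. exact cf0. }
  destruct (fin_order F0 f HF0 Hf) as [N1 [HN1 EN1]].
  destruct (fin_order Fh f' HFh Hf') as [N2 [HN2 EN2]].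
  assert (EN2' : zpow f2 N2 = gone).
  { unfold f2. rewrite <- zpow_hom by apply conj_hom. rewrite EN2. apply hom1, conj_hom. }
  assert (Z1 : zpow h0 ((1 - c * d) * (N1 * N2)) = gone).
  { rewrite zpow_mul, Ecd, zpow_prod.
    - rewrite <- zpow_mul. replace (d * (N1 * N2))%Z with (N1 * (d * N2))%Z by ring.
      rewrite zpow_mul, EN1, zpow_one, mul1l.
      rewrite Z.mul_comm, zpow_mul, EN2', zpow_one. reflexivity.
    - symmetry. apply zpow_comm. symmetry. exact cff2. }
  assert (Hcd : (1 - c * d = 0)%Z).
  { destruct (Z.eq_dec (1 - c * d) 0) as [e|ne]. exact e. exfalso.
    apply (Hinf0 ((1 - c * d) * (N1 * N2))%Z). apply Z.neq_mul_0. split. exact ne.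
    apply Z.neq_mul_0; auto. exact Z1. }
  assert (Hc : (c * d = 1)%Z) by lia.
  exists h'. split.
  - unfold big. apply Z.eq_mul_1 in Hc. destruct Hc as [-> | ->].
    + apply in_or_app. left. apply in_map_iff. exists f. auto.
    + apply in_or_app. right. apply in_map_iff. exists f. auto.
  - exists (ginv k). reflexivity.
Qed.

Lemma conj_trans {G : Group} (x y t : G) : conjugate G x t -> conjugate G y t -> conjugate G x y.
Proof. intros [k1 E1] [k2 E2]. exists (k1 <*> ginv k2).
  rewrite <- conj_comp, E1, <- E2. apply conjK'. Qed.

Theorem lemma4p10 (G : Group) (M : nat) :
  non_elementary_hyperbolic G ->
  max_finite_subgroup_order G M ->
  forall g : G, has_infinite_order G g ->
  forall l : list G,
    (forall h, In h l -> primitive G h /\ commensurated G g h) ->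
    (forall i j, (i < length l)%nat -> (j < length l)%nat -> i <> j ->
       forall d, ~ conjugate G (nth i l d) (nth j l d)) ->
    (length l <= 2 * M)%nat.
Proof.
  intros _ [_ Hmax] g _ l Hl Hnc.
  destruct l as [|h0 l']; [simpl; lia|].
  destruct (Hl h0 (or_introl eq_refl)) as [[Hinf0 [F0 [HF0 [Hc0 HE0]]]] Hcm0].
  set (T := fun x : G => epsilon (inhabits g)
              (fun t => In t (big h0 F0) /\ conjugate G x t)).
  assert (HT : forall x, In x (h0 :: l') -> In (T x) (big h0 F0) /\ conjugate G x (T x)).
  { intros x Hx. unfold T. apply epsilon_spec.
    destruct (Hl x Hx) as [Hpx Hcx].
    exact (key g h0 x F0 Hinf0 HF0 Hc0 HE0 Hcm0 Hpx Hcx). }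
  assert (HND : NoDup (map T (h0 :: l'))).
  { apply (NoDup_nth _ (T g)). rewrite length_map. intros i j Hi Hj E.
    rewrite !map_nth in E.
    destruct (Nat.eq_dec i j) as [e|ne]. exact e. exfalso.
    apply (Hnc i j Hi Hj ne g).
    destruct (HT _ (nth_In _ g Hi)) as [_ Ci].
    destruct (HT _ (nth_In _ g Hj)) as [_ Cj].
    rewrite E in Ci. exact (conj_trans _ _ _ Ci Cj). }
  assert (Hinc : incl (map T (h0 :: l')) (big h0 F0)).
  { intros y Hy. apply in_map_iff in Hy. destruct Hy as [x [<- Hx]]. apply HT, Hx. }
  pose proof (NoDup_incl_length HND Hinc) as Hle.
  rewrite length_map in Hle. unfold big in Hle. rewrite length_app, !length_map in Hle.
  pose proof (Hmax F0 HF0). lia.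
Qed.
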